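(* Let $G_1=(V,D_1,B_1)$ and $G_2=(V,D_2,B_2)$ be simple mixed graphs with the same skeleton and the same collider triples, and let $(\Lambda_i,\Omega_i)\in\mathbb{R}^{D_i}\times\mathit{PD}(B_i)$ for $i=1,2$. If $(\Lambda_2,\Omega_2^{od})$ equals the edge labeling on $G_2$ induced by $(\Lambda_1,\Omega_1)$, then $\det(I-\Lambda_1)=\det(I-\Lambda_2)$. In particular, if $\Lambda_1\in\mathbb{R}^{D_1}_{\mathrm{reg}}$ then $\Lambda_2\in\mathbb{R}^{D_2}_{\mathrm{reg}}$.
   Context: A mixed graph with finite vertex set $V$ is a triple $G=(V,D,B)$ with $D$ a set of ordered pairs $(i,j)$, $i\ne j$ (directed edges $i\to j$, head $j$) and $B$ a set of unordered pairs $\{i,j\}$, $i\ne j$ (bidirected edges $i\leftrightarrow j$, both endpoints heads). It is simple if any two distinct nodes are joined by at most one edge. The skeleton is the undirected graph obtained by replacing all edges by undirected ones. A collider triple is a triple $(i,j,k)$ with an edge between $i$ and $j$ and an edge between $j$ and $k$, $j$ being a head on both (regardless of adjacency of $i,k$). $\mathbb{R}^D$ is the set of real $V\times V$ matrices $\Lambda$ with $\lambda_{ij}=0$ for $(i,j)\notin D$, $\mathbb{R}^D_{\mathrm{reg}}$ those with $I-\Lambda$ invertible; $\mathit{PD}(B)$ is the set of positive definite symmetric matrices $\Omega$ with $\omega_{ij}=0$ for $i\neq j$, $\{i,j\}\notin B$. For a matrix $\Omega$, $\Omega^{od}$ denotes its off-diagonal part ($\Omega=\Omega^d+\Omega^{od}$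 with $\Omega^d$ diagonal). For simple $G_1,G_2$ with the same skeleton and $(\Lambda_1,\Omega_1)$ for $G_1$, the induced edge labeling on $G_2$ is the pair $(\Lambda_2,\Omega_2^{od})$ with $(\Lambda_2)_{ij}=(\Lambda_1)_{ij}$ if $i\to j\in G_1$ and $i\to j\in G_2$; $=(\Lambda_1)_{ji}$ if $j\to i\in G_1$ and $i\to j\in G_2$; $=(\Omega_1)_{ij}$ if $i\leftrightarrow j\in G_1$ and $i\to j\in G_2$; $=0$ if $i\to j\notin G_2$; and $(\Omega_2^{od})_{ij}=(\Lambda_1)_{ij}$ if $i\to j\in G_1$ and $i\leftrightarrow j\in G_2$; $=(\Lambda_1)_{ji}$ if $j\to i\in G_1$ and $i\leftrightarrow j\in G_2$; $=(\Omega_1)_{ij}$ if $i\leftrightarrow j\in G_1$ and $i\leftrightarrow j\in G_2$; $=0$ if $i\leftrightarrow j\notin G_2$ or $i=j$. *)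

(* Defs.v *)
From HB Require Import structures.
From mathcomp Require Import all_boot all_order all_algebra.
Set Implicit Arguments. Unset Strict Implicit. Unset Printing Implicit Defensive.
Import Order.TTheory GRing.Theory Num.Theory.
Local Open Scope ring_scope.

(* A mixed graph on 'I_n: D i j = directed edge i -> j, B i j = bidirected edge
   i <-> j (stored as a symmetric relation). *)
Definition mixed_graph (n : nat) (D B : rel 'I_n) : Prop :=
  (forall i, ~~ D i i) /\ (forall i, ~~ B i i) /\ (forall i j, B i j = B j i).

Definition simple_mg (n : nat) (D B : rel 'I_n) : Prop :=
  forall i j, i != j ->
    [&& ~~ (D i j && D j i), ~~ (D i j && B i j) & ~~ (D j i && B i j)].

Definition skel (n : nat) (D B : rel 'I_n) (i j : 'I_n) : bool :=
  [|| D i j, D j i | B i j].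

(* the (unique, in a simple graph) edge between i and j has a head at j *)
Definition head_at (n : nat) (D B : rel 'I_n) (i j : 'I_n) : bool :=
  D i j || B i j.

(* collider triple (i,j,k): edges i-j and j-k, both with a head at j;
   i and k are distinct (adjacency of i,k irrelevant) *)
Definition collider (n : nat) (D B : rel 'I_n) (i j k : 'I_n) : bool :=
  [&& i != k, head_at D B i j & head_at D B k j].

Definition supp_D (R : nzRingType) (n : nat) (D : rel 'I_n) (L : 'M[R]_n) : Prop :=
  forall i j, ~~ D i j -> L i j = 0.

Definition posdef (R : realFieldType) (n : nat) (O : 'M[R]_n) : Prop :=
  O^T = O /\ forall v : 'rV[R]_n, v != 0 -> 0 < (v *m O *m v^T) ord0 ord0.

Definition PD_B (R : realFieldType) (n : nat) (B : rel 'I_n) (O : 'M[R]_n) : Prop :=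
  posdef O /\ forall i j, i != j -> ~~ B i j -> O i j = 0.

Definition offdiag (R : nzRingType) (n : nat) (O : 'M[R]_n) : 'M[R]_n :=
  \matrix_(i, j) (if i == j then 0 else O i j).

(* label of the G1-edge between i and j, read in direction i,j *)
Definition edge_label (R : nzRingType) (n : nat) (D1 B1 : rel 'I_n)
  (L1 O1 : 'M[R]_n) (i j : 'I_n) : R :=
  if D1 i j then L1 i j else if D1 j i then L1 j i
  else if B1 i j then O1 i j else 0.

Definition induced_L (R : nzRingType) (n : nat) (D1 B1 D2 : rel 'I_n)
  (L1 O1 : 'M[R]_n) : 'M[R]_n :=
  \matrix_(i, j) (if D2 i j then edge_label D1 B1 L1 O1 i j else 0).

Definition induced_Ood (R : nzRingType) (n : nat) (D1 B1 B2 : rel 'I_n)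
  (L1 O1 : 'M[R]_n) : 'M[R]_n :=
  \matrix_(i, j) (if (i != j) && B2 i j then edge_label D1 B1 L1 O1 i j else 0).

(* Main.v *)
Require Import Defs.
From mathcomp Require Import all_boot all_order all_algebra.
From mathcomp Require Import fingroup perm.
Import GRing.Theory Num.Theory.
Set Implicit Arguments. Unset Strict Implicit. Unset Printing Implicit Defensive.
Local Open Scope ring_scope.

Definition phif (n : nat) (D : rel 'I_n) (s : 'S_n) : 'I_n -> 'I_n :=
  fun i => if D i (s i) then s i else (s^-1)%g i.

Definition phi (n : nat) (D : rel 'I_n) (s : 'S_n) : 'S_n :=
  match injectiveP (phif D s) with
  | ReflectT H => perm H
  | ReflectF _ => s
  end.

Lemma phiE (n : nat) (D : rel 'I_n) (s : 'S_n) :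
  injective (phif D s) -> phi D s =1 phif D s.
Proof. rewrite /phi; case: injectiveP => // H _ i; by rewrite permE. Qed.

Section G.
Set Default Proof Using "All".
Variables (n : nat) (D1 B1 D2 B2 : rel 'I_n).
Hypotheses (m1 : mixed_graph D1 B1) (m2 : mixed_graph D2 B2)
  (s1 : simple_mg D1 B1) (s2 : simple_mg D2 B2)
  (hsk : forall i j, skel D1 B1 i j = skel D2 B2 i j)
  (hcol : forall i j k, collider D1 B1 i j k = collider D2 B2 i j k).
Variable (s : 'S_n).
Hypothesis hS : forall i, s i != i -> D1 i (s i).

Lemma nofix_inv i : ((s^-1)%g i != i) = (s i != i).
Proof.
apply/idP/idP; apply: contra => /eqP H.
- by rewrite -{1}H permK.
- by rewrite -{1}H permKV.
Qed.

Lemma D1_not_rev i : s i != i -> ~~ D1 (s i) i /\ ~~ B1 (s i) i.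
Proof.
move=> Hi; have := s1 (i:=i) (j:=s i); rewrite eq_sym Hi hS //= => /(_ isT).
case: m1 => _ [_ Bs]; rewrite (Bs (s i) i).
by case: (D1 (s i) i); case: (B1 i (s i)).
Qed.

Lemma no2cyc i : s i != i -> (s^-1)%g i != s i.
Proof.
move=> Hi; apply/negP => /eqP H.
have Hj : s (s i) = i by rewrite -H permKV.
have Hsi : s (s i) != s i by rewrite Hj eq_sym.
have := hS Hsi; rewrite Hj.
by case: (D1_not_rev Hi) => /negbTE ->.
Qed.

Lemma noncol2 i : s i != i ->
  ~~ (head_at D2 B2 ((s^-1)%g i) i && head_at D2 B2 (s i) i).
Proof.
move=> Hi.
have : collider D1 B1 ((s^-1)%g i) i (s i) = false.
  rewrite /collider /head_at; case: (D1_not_rev Hi) => /negbTE -> /negbTE ->.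
  by rewrite !andbF.
by rewrite hcol /collider no2cyc //= => /negbT.
Qed.

Lemma skel2 i : s i != i -> [|| D2 i (s i), D2 (s i) i | B2 i (s i)].
Proof. move=> Hi; have := hsk i (s i); rewrite /skel hS // => E; by rewrite -E. Qed.

Definition fwd i := D2 i (s i).

Lemma fwd_fix i : s i = i -> ~~ fwd i.
Proof. by move=> H; rewrite /fwd H; case: m2. Qed.

Lemma snofix i : s i != i -> s (s i) != s i.
Proof. by move=> Hi; apply: contra Hi => /eqP /perm_inj ->. Qed.

Lemma fwd_step i : fwd i -> fwd (s i).
Proof.
move=> Hf; have Hi : s i != i by apply/eqP => H; move: (fwd_fix H); rewrite Hf.
have Hj := snofix Hi.
have := noncol2 Hj; rewrite permK /head_at /fwd.
move: Hf; rewrite /fwd => ->; rewrite /=.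
have := skel2 Hj; case: m2 => _ [_ Bs]; rewrite (Bs (s i) (s (s i))).
by case: (D2 (s i) (s (s i))); case: (D2 (s (s i)) (s i)); case: (B2 (s (s i)) (s i)).
Qed.

Lemma fwd_iter k i : fwd i -> fwd ((s^+k)%g i).
Proof.
elim: k => [|k IH] Hf; first by rewrite expg0 perm1.
by rewrite expgSr permM; apply: fwd_step; apply: IH.
Qed.

Lemma fwd_back i : fwd (s i) -> fwd i.
Proof.
move=> Hf; have := expg_order s; have := order_gt0 s.
case: #[s]%g => // k _ Ho.
have : (s ^+ k.+1)%g i = i by rewrite Ho perm1.
rewrite expgS permM => <-; exact: fwd_iter.
Qed.

Lemma fwdS i : fwd (s i) = fwd i.
Proof. apply/idP/idP; [exact: fwd_back | exact: fwd_step]. Qed.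

Lemma fwdV i : fwd ((s^-1)%g i) = fwd i.
Proof. by rewrite -{2}(permKV s i) fwdS. Qed.

Lemma rev_edge i : s i != i -> ~~ fwd i -> D2 (s i) i.
Proof.
move=> Hi Hf; have := skel2 Hi; move: (Hf); rewrite /fwd => /negbTE -> /=.
case E: (D2 (s i) i) => //= HB.
have Hj := snofix Hi.
have := noncol2 Hj; rewrite permK /head_at.
case: m2 => _ [_ Bs]; rewrite HB orbT /=.
have := skel2 Hj; rewrite (Bs (s i) (s (s i))).
have -> : D2 (s i) (s (s i)) = false by apply/negbTE; rewrite -/(fwd (s i)) fwdS.
by case: (D2 (s (s i)) (s i)); case: (B2 (s (s i)) (s i)).
Qed.

Lemma rev_edgeV i : s i != i -> ~~ fwd i -> D2 i ((s^-1)%g i).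
Proof.
move=> Hi Hf; have Hj : s ((s^-1)%g i) != (s^-1)%g i by rewrite permKV eq_sym nofix_inv.
have := rev_edge Hj; rewrite fwdV permKV; exact.
Qed.

Lemma phif_fwd i : phif D2 s i = if fwd i then s i else (s^-1)%g i.
Proof. by []. Qed.

Lemma phif_inj : injective (phif D2 s).
Proof.
have key : forall i j, fwd i -> ~~ fwd j -> s i = (s^-1)%g j -> False.
  move=> i j Hi Hj E; have : j = s (s i) by rewrite E permKV.
  by move=> Ej; move: Hj; rewrite Ej !fwdS Hi.
move=> i j; rewrite !phif_fwd.
case Hi: (fwd i); case Hj: (fwd j).
- exact: perm_inj.
- by move=> E; case: (key i j); rewrite ?Hi ?Hj.
- by move=> E; case: (key j i); rewrite ?Hi ?Hj.
- exact: perm_inj.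
Qed.

Lemma phiP i : phi D2 s i = if fwd i then s i else (s^-1)%g i.
Proof. by rewrite (phiE phif_inj). Qed.

Lemma phi_S2 i : phi D2 s i != i -> D2 i (phi D2 s i).
Proof.
rewrite phiP; case Hf: (fwd i) => //.
rewrite nofix_inv => Hi; apply: rev_edgeV => //; by rewrite Hf.
Qed.

Lemma phi_iter k i :
  ((phi D2 s)^+k)%g i = ((if fwd i then s else (s^-1)%g)^+k)%g i.
Proof.
suff : ((phi D2 s)^+k)%g i = ((if fwd i then s else (s^-1)%g)^+k)%g i /\
       fwd (((if fwd i then s else (s^-1)%g)^+k)%g i) = fwd i by case.
elim: k => [|k [IH1 IH2]]; first by rewrite !expg0 !perm1.
rewrite !expgSr !permM IH1 phiP IH2.
by case Hf: (fwd i) IH2 => /= IH2; rewrite ?fwdS ?fwdV IH2.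
Qed.

Lemma phi_porbit i : porbit (phi D2 s) i = porbit s i.
Proof.
transitivity (porbit (if fwd i then s else (s^-1)%g) i).
  apply/porbit_setP => y; apply/porbitP/porbitP => [] [k ->]; exists k;
  by rewrite phi_iter.
by case: (fwd i); rewrite ?porbitV.
Qed.

Lemma phi_odd : odd_perm (phi D2 s) = odd_perm s.
Proof.
rewrite /odd_perm /porbits; congr (_ (+) odd #|_|).
have E : porbit (phi D2 s) =1 porbit s by move=> i; exact: phi_porbit.
by rewrite (eq_imset _ E).
Qed.

Lemma back_pt i :
  (if D1 i (phi D2 s i) then phi D2 s i else ((phi D2 s)^-1)%g i) = s i.
Proof.
have [Hfix|Hi] := eqVneq (s i) i.
  have Hp : phi D2 s i = i.
    rewrite phiP (negbTE (fwd_fix Hfix)).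
    by rewrite -{1}Hfix permK.
  rewrite Hp Hfix; case: m1 => /(_ i) /negbTE -> _.
  by rewrite -{1}Hp permK.
rewrite phiP; case Hf: (fwd i); first by rewrite hS.
have -> : D1 i ((s^-1)%g i) = false.
  have Hj : s ((s^-1)%g i) != (s^-1)%g i by rewrite permKV eq_sym nofix_inv.
  have := D1_not_rev Hj; rewrite permKV; case=> /negbTE -> //.
apply: (@perm_inj _ (phi D2 s)); rewrite permKV phiP fwdS Hf permK //.
Qed.

Lemma phi_prod (R : comNzRingType) (L1 L2 O1 : 'M[R]_n) :
  supp_D D1 L1 -> L2 = induced_L D1 B1 D2 L1 O1 ->
  \prod_i (1%:M - L2) i (phi D2 s i) = \prod_i (1%:M - L1) i (s i).
Proof.
move=> hL1 ->.
pose h i := if fwd i then i else (s^-1)%g i.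
have hinj : injective h.
  move=> i j; rewrite /h.
  case Hi: (fwd i); case Hj: (fwd j) => //; try exact: perm_inj.
  - move=> E; move: Hi; rewrite E fwdV Hj //.
  - move=> E; move: Hj; rewrite -E fwdV Hi //.
rewrite [in RHS](reindex_inj hinj); apply: eq_bigr => i _.
rewrite /h !mxE phiP.
have [Hfix|Hi] := eqVneq (s i) i.
  have Hv : (s^-1)%g i = i by rewrite -{1}Hfix permK.
  rewrite (negbTE (fwd_fix Hfix)) Hv Hfix eqxx.
  case: m1 => D1i _; case: m2 => D2i _.
  by rewrite hL1 ?D1i // (negbTE (D2i i)).
case Hf: (fwd i).
  move: (Hf); rewrite /fwd => ->; rewrite /edge_label hS //.
have HV := rev_edgeV Hi (negbT Hf). rewrite HV permKV.
have Hj : s ((s^-1)%g i) != (s^-1)%g i by rewrite permKV eq_sym nofix_inv.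
have := D1_not_rev Hj; rewrite permKV; case=> /negbTE Hn _.
rewrite /edge_label Hn.
have := hS Hj; rewrite permKV => ->.
by rewrite eq_sym.
Qed.

End G.


Definition Sb (n : nat) (D : rel 'I_n) (s : 'S_n) : bool :=
  [forall i, (s i != i) ==> D i (s i)].

Lemma SbP (n : nat) (D : rel 'I_n) (s : 'S_n) :
  reflect (forall i, s i != i -> D i (s i)) (Sb D s).
Proof.
apply: (iffP forallP) => H i; first by move=> Hi; have := H i; rewrite Hi.
by apply/implyP; apply: H.
Qed.

Lemma det_restr (R : comNzRingType) (n : nat) (D : rel 'I_n) (L : 'M[R]_n) :
  supp_D D L ->
  \det (1%:M - L) = \sum_(s : 'S_n | Sb D s) (-1) ^+ s * \prod_i (1%:M - L) i (s i).
Proof.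
move=> hL; rewrite /determinant (bigID (Sb D)) /= [X in _ + X]big1 ?addr0 //.
move=> s /SbP H.
have [i Hi] : exists i, (s i != i) && ~~ D i (s i).
  apply/existsP; apply/negP => /existsP /= Hn; apply: H => i Hi.
  apply/negPn/negP => Hd; apply: Hn; exists i; by rewrite Hi Hd.
case/andP: Hi => Hi Hd.
rewrite (bigD1 i) //= !mxE hL // eq_sym (negbTE Hi) subrr mul0r mulr0 //.
Qed.

Theorem lemma4 (R : realFieldType) (n : nat) (D1 B1 D2 B2 : rel 'I_n)
  (L1 O1 L2 O2 : 'M[R]_n) :
  mixed_graph D1 B1 -> mixed_graph D2 B2 ->
  simple_mg D1 B1 -> simple_mg D2 B2 ->
  (forall i j, skel D1 B1 i j = skel D2 B2 i j) ->
  (forall i j k, collider D1 B1 i j k = collider D2 B2 i j k) ->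
  supp_D D1 L1 -> PD_B B1 O1 ->
  supp_D D2 L2 -> PD_B B2 O2 ->
  L2 = induced_L D1 B1 D2 L1 O1 ->
  offdiag O2 = induced_Ood D1 B1 B2 L1 O1 ->
  \det (1%:M - L1) = \det (1%:M - L2) /\
  ((1%:M - L1) \in unitmx -> (1%:M - L2) \in unitmx).
Proof.
move=> m1 m2 s1 s2 hsk hcol hL1 _ hL2 _ hL _.
have hsk' : forall i j, skel D2 B2 i j = skel D1 B1 i j by move=> i j; rewrite hsk.
have hcol' : forall i j k, collider D2 B2 i j k = collider D1 B1 i j k
  by move=> i j k; rewrite hcol.
have Hdet : \det (1%:M - L1) = \det (1%:M - L2).
  rewrite (det_restr hL1) (det_restr hL2).
  symmetry; rewrite (reindex_onto (phi D2) (phi D1)); last first.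
    move=> t /SbP Ht.
    have Hs : forall i, phi D1 t i != i -> D1 i (phi D1 t i)
      by move=> i; apply: (phi_S2 m2 m1 s2 s1 hsk' hcol' Ht).
    apply/permP => i.
    rewrite (phiE (phif_inj m1 m2 s1 s2 hsk hcol Hs)) /phif.
    by have := back_pt m2 m1 s2 s1 hsk' hcol' Ht i.
  have Pe : forall s, (Sb D2 (phi D2 s) && (phi D1 (phi D2 s) == s)) = Sb D1 s.
    move=> s; apply/idP/idP.
    - case/andP => /SbP Ht /eqP <-; apply/SbP.
      by move=> i; apply: (phi_S2 m2 m1 s2 s1 hsk' hcol' Ht).
    - move=> /SbP Hs.
      have Ht : forall i, phi D2 s i != i -> D2 i (phi D2 s i)
        by move=> i; apply: (phi_S2 m1 m2 s1 s2 hsk hcol Hs).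
      apply/andP; split; first by apply/SbP.
      apply/eqP/permP => i.
      rewrite (phiE (phif_inj m2 m1 s2 s1 hsk' hcol' Ht)) /phif.
      by have := back_pt m1 m2 s1 s2 hsk hcol Hs i.
  apply: eq_big => // s; rewrite Pe => /SbP Hs.
  rewrite (phi_odd m1 m2 s1 s2 hsk hcol Hs).
  by rewrite (phi_prod m1 m2 s1 s2 hsk hcol Hs hL1 hL).
split => //; by rewrite !unitmxE Hdet.
Qed.
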